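(* Let $\mathscr{A},\mathscr{B}$ be real Banach spaces and let $p,p'\in(1,+\infty)$ with $1/p+1/p'=1$. Suppose that $(\lambda,\mu)\in(\mathscr{A}^*\oplus_{p'}\mathscr{B}^* )\setminus\{(0,0)\}$ is norming for $(\mathbf{a},\mathbf{b})\in(\mathscr{A}\oplus_p\mathscr{B})\setminus\{(0,0)\}$. Then: 1. If $\mathbf{b}=0$, then $\mu=0$ and $\lambda$ is norming for $\mathbf{a}$. 2. If $\mathbf{a}=0$, then $\lambda=0$ and $\mu$ is norming for $\mathbf{b}$. 3. If $\mathbf{a}\neq0$ and $\mathbf{b}\neq0$, then $\lambda\neq0$, $\mu\neq0$, $\big(1+\|\mathbf{b}\|_{\mathscr{B}}^p/\|\mathbf{a}\|_{\mathscr{A}}^p\big)^{1/p'}\lambda$ is norming for $\mathbf{a}$, and $\big(1+\|\mathbf{a}\|_{\mathscr{A}}^p/\|\mathbf{b}\|_{\mathscr{B}}^p\big)^{1/p'}\mu$ is norming for $\mathbf{b}$.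
   Context: For Banach spaces $\mathscr{A},\mathscr{B}$ and $q\in[1,\infty)$, $\mathscr{A}\oplus_q\mathscr{B}$ is the Cartesian product with componentwise operations and norm $\|(\mathbf{a},\mathbf{b})\|=(\|\mathbf{a}\|_{\mathscr{A}}^q+\|\mathbf{b}\|_{\mathscr{B}}^q)^{1/q}$. The dual of $\mathscr{A}\oplus_p\mathscr{B}$ is identified with $\mathscr{A}^*\oplus_{p'}\mathscr{B}^*$ via the pairing $\langle(\mathbf{a},\mathbf{b}),(\lambda,\mu)\rangle=\lambda(\mathbf{a})+\mu(\mathbf{b})$. A functional $\phi$ in the dual of a Banach space $\mathscr{C}$ is norming for a nonzero $\mathbf{c}\in\mathscr{C}$ if $\|\phi\|=1$ and $\phi(\mathbf{c})=\|\mathbf{c}\|_{\mathscr{C}}$. *)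

(* Defs.v *)
From HB Require Import structures.
From mathcomp Require Import all_boot all_order all_algebra.
From mathcomp Require Import all_classical all_reals all_analysis.
Set Implicit Arguments. Unset Strict Implicit. Unset Printing Implicit Defensive.
Import Order.TTheory GRing.Theory Num.Theory.
Import numFieldNormedType.Exports.
Local Open Scope classical_set_scope.
Local Open Scope ring_scope.

Definition dual_norm {R : realType} {V : normedModType R} (f : V -> R) : R :=
  sup [set `|f x| | x in [set x : V | `|x| <= 1]].

Definition norming {R : realType} {V : normedModType R} (f : V -> R) (c : V) : Prop :=
  dual_norm f = 1 /\ f c = `|c|.

Definition pnorm2 {R : realType} (q s t : R) : R :=
  (s `^ q + t `^ q) `^ q^-1.

(* (lam, mu) in A^* (+)_{p'} B^* is norming for (a, b) in A (+)_p B: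
   the p'-norm of (||lam||, ||mu||) is 1 and
   lam a + mu b = (||a||^p + ||b||^p)^(1/p). *)
Definition norming_pair {R : realType} {A B : normedModType R} (p p' : R)
  (lam : A -> R) (mu : B -> R) (a : A) (b : B) : Prop :=
  pnorm2 p' (dual_norm lam) (dual_norm mu) = 1 /\
  lam a + mu b = pnorm2 p `|a| `|b|.

(* Main.v *)
Require Import Defs.
From HB Require Import structures.
From mathcomp Require Import all_boot all_order all_algebra.
From mathcomp Require Import all_classical all_reals all_analysis.
Import Order.TTheory GRing.Theory Num.Theory.
Import numFieldNormedType.Exports.
Local Open Scope classical_set_scope.
Local Open Scope ring_scope.
From mathcomp Require Import ring lra.
Lemma expR_tangent (R : realType) (z m : R) :
  expR m * (1 + (z - m)) <= expR z /\ (z != m -> expR m * (1 + (z - m)) < expR z).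
Proof.
have -> : expR z = expR m * expR (z - m) by rewrite -expRD addrC subrK.
split; first by rewrite ler_pM2l ?expR_gt0 // expR_ge1Dx.
by move=> hz; rewrite ltr_pM2l ?expR_gt0 // expR_gt1Dx // subr_eq0.
Qed.

Lemma young_eq (R : realType) (a b p q : R) : 0 <= a -> 0 <= b -> 0 < p -> 0 < q ->
  p^-1 + q^-1 = 1 -> a * b = a `^ p / p + b `^ q / q -> a `^ p = b `^ q.
Proof.
move=> a0 b0 p0 q0 hpq.
have pn0 : p != 0 by rewrite gt_eqF.
have qn0 : q != 0 by rewrite gt_eqF.
have [->|az] := eqVneq a 0.
  rewrite mul0r powR0 // mul0r add0r => /esym/eqP.
  by rewrite mulf_eq0 invr_eq0 (negbTE qn0) orbF => /eqP ->.
have [->|bz] := eqVneq b 0.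
  rewrite mulr0 powR0 // mul0r addr0 => /esym/eqP.
  by rewrite mulf_eq0 invr_eq0 (negbTE pn0) orbF => /eqP ->.
have apos : 0 < a by rewrite lt_neqAle eq_sym az.
have bpos : 0 < b by rewrite lt_neqAle eq_sym bz.
have hA : a `^ p = expR (p * ln a) by rewrite /powR (negbTE az).
have hB : b `^ q = expR (q * ln b) by rewrite /powR (negbTE bz).
have hab : a * b = expR (ln a + ln b) by rewrite expRD !lnK.
rewrite hA hB hab.
set la := ln a; set lb := ln b; set m := la + lb.
have [t1 s1] := (@expR_tangent R (p * la) m).
have [t2 s2] := (@expR_tangent R (q * lb) m).
set E := expR m.
have ide : E * (1 + (p * la - m)) / p + E * (1 + (q * lb - m)) / q = E.
  have -> : E * (1 + (p * la - m)) / p = E * p^-1 + E * la - E * m * p^-1 by field.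
  have -> : E * (1 + (q * lb - m)) / q = E * q^-1 + E * lb - E * m * q^-1 by field.
  have -> : q^-1 = 1 - p^-1 by lra.
  rewrite /m; ring.
have ipos : 0 < p^-1 by rewrite invr_gt0.
have iqpos : 0 < q^-1 by rewrite invr_gt0.
move=> heq.
have e1 : p * la = m.
  apply/eqP; apply/negPn/negP => /s1 h1.
  have : E * (1 + (p * la - m)) / p < expR (p * la) / p by rewrite ltr_pM2r.
  have : E * (1 + (q * lb - m)) / q <= expR (q * lb) / q by rewrite ler_pM2r.
  lra.
have e2 : q * lb = m.
  apply/eqP; apply/negPn/negP => /s2 h2.
  have : E * (1 + (p * la - m)) / p <= expR (p * la) / p by rewrite ler_pM2r.
  have : E * (1 + (q * lb - m)) / q < expR (q * lb) / q by rewrite ltr_pM2r.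
  lra.
by rewrite e1 e2.
Qed.
Lemma dn_hassup (R : realType) (V : normedModType R) (f : V -> R) (r : R) :
  (forall x, `|f x| <= r * `|x|) ->
  has_sup [set `|f x| | x in [set x : V | `|x| <= 1]].
Proof.
move=> hr; split.
  by exists `|f 0|; exists 0 => //=; rewrite normr0.
exists (`|r|) => _ [x /= hx <-].
apply: (le_trans (hr x)); apply: (le_trans (ler_norm _)).
rewrite normrM; apply: (le_trans (y := `|r| * 1)); last by rewrite mulr1.
by rewrite ler_wpM2l // normr_id.
Qed.

Lemma dn_prop (R : realType) (V : normedModType R) (f : V -> R) (r : R) :
  (forall x, `|f x| <= r * `|x|) -> (forall (c : R) x, f (c *: x) = c * f x) ->
  (forall z, `|f z| <= dual_norm f * `|z|) /\ 0 <= dual_norm f.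
Proof.
move=> hr hlin.
have hs := @dn_hassup _ _ _ _ hr.
have f0 : f 0 = 0 by rewrite -(scale0r 0) hlin mul0r.
have ub := sup_upper_bound hs.
split; last first.
  by apply: (le_trans (normr_ge0 (f 0))); apply: ub; exists 0 => //=; rewrite normr0.
move=> z; have [->|zn] := eqVneq z 0; first by rewrite f0 !normr0 mulr0.
have zp : 0 < `|z| by rewrite normr_gt0.
have : `|f (`|z|^-1 *: z)| <= dual_norm f.
  apply: ub; exists (`|z|^-1 *: z) => //=.
  by rewrite normrZ normfV normr_id mulVf // gt_eqF.
rewrite hlin normrM normfV normr_id -ler_pdivlMl ?invr_gt0 // invrK mulrC.
done.
Qed.

Lemma dn_linear (R : realType) (V : normedModType R) (f : {linear V -> R^o}) :
  continuous (f : V -> R) ->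
  (forall z, `|f z| <= dual_norm (f : V -> R) * `|z|) /\ 0 <= dual_norm (f : V -> R).
Proof.
move=> fc.
have hb : bounded_near f (nbhs (0 : V)) by apply: continuous_linear_bounded; apply: fc.
have [M [Mr HM]] := (linear_boundedP f).1 hb.
apply: (@dn_prop _ _ _ (`|M| + 1)).
  apply: HM; rewrite (le_lt_trans (real_ler_norm Mr)) // ltrDl //.
by move=> c x; rewrite linearZ.
Qed.

Lemma dn_scale (R : realType) (V : normedModType R) (f : V -> R) (r c : R) :
  (forall x, `|f x| <= r * `|x|) -> 0 < c ->
  dual_norm (fun x => c * f x) = c * dual_norm f.
Proof.
move=> hr cp.
have hs := @dn_hassup _ _ _ _ hr.
have hs' : has_sup [set `|(fun x => c * f x) x| | x in [set x : V | `|x| <= 1]].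
  apply: (@dn_hassup _ _ _ (c * r)) => x; rewrite normrM gtr0_norm // -mulrA.
  by rewrite ler_pM2l.
apply/eqP; rewrite eq_le; apply/andP; split.
  apply: ge_sup; first by case: hs'.
  move=> _ [x /= hx <-]; rewrite normrM gtr0_norm // ler_pM2l //.
  by apply: (sup_upper_bound hs); exists x.
rewrite -ler_pdivlMl //; apply: ge_sup; first by case: hs.
move=> _ [x /= hx <-]; rewrite ler_pdivlMl //.
have := sup_upper_bound hs'; apply; exists x => //=.
by rewrite normrM gtr0_norm.
Qed.
Lemma powR_div (R : realType) (x N p : R) : 0 <= x -> 0 < N ->
  (x / N) `^ p = x `^ p / N `^ p.
Proof.
move=> x0 N0; rewrite powRM //; last by rewrite invr_ge0 ltW.
congr (_ * _).
rewrite /powR invr_eq0 (gt_eqF N0) lnV ?posrE // mulrN expRN //.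
Qed.

Lemma powR_inv_cancel (R : realType) (T r : R) : 0 <= T -> r != 0 ->
  (T `^ r^-1) `^ r = T.
Proof. by move=> T0 r0; rewrite -powRrM mulVf // powRr1. Qed.

Lemma core (R : realType) (A B : normedModType R) (p p' : R)
  (hp : 1 < p) (hp' : 1 < p') (hpp' : p^-1 + p'^-1 = 1)
  (lam : A -> R) (mu : B -> R) (a : A) (b : B)
  (hl : forall z, `|lam z| <= dual_norm lam * `|z|) (hl0 : 0 <= dual_norm lam)
  (hm : forall z, `|mu z| <= dual_norm mu * `|z|) (hm0 : 0 <= dual_norm mu)
  (hab : ~ (a = 0 /\ b = 0))
  (hnorm : norming_pair p p' lam mu a b) :
  let N := pnorm2 p `|a| `|b| in
  0 < N /\ N `^ p = `|a| `^ p + `|b| `^ p /\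
  lam a = dual_norm lam * `|a| /\ mu b = dual_norm mu * `|b| /\
  (`|a| / N) `^ p = dual_norm lam `^ p' /\ (`|b| / N) `^ p = dual_norm mu `^ p'.
Proof.
move=> N.
set x := `|a|; set y := `|b|; set al := dual_norm lam; set be := dual_norm mu.
have p0 : 0 < p by lra.
have p'0 : 0 < p' by lra.
have pn0 : p != 0 by rewrite gt_eqF.
have p'n0 : p' != 0 by rewrite gt_eqF.
have x0 : 0 <= x by rewrite /x normr_ge0.
have y0 : 0 <= y by rewrite /y normr_ge0.
have S0 : 0 < x `^ p + y `^ p.
  have [a0|an] := eqVneq a 0.
    have bn : b != 0 by apply/eqP => b0; apply: hab.
    have : 0 < y `^ p by apply: powR_gt0; rewrite normr_gt0.
    have := powR_ge0 x p; lra.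
  have : 0 < x `^ p by apply: powR_gt0; rewrite normr_gt0.
  have := powR_ge0 y p; lra.
have N0 : 0 < N by apply: powR_gt0.
have NP : N `^ p = x `^ p + y `^ p by rewrite powR_inv_cancel // ltW.
have T1 : al `^ p' + be `^ p' = 1.
  case: hnorm => h1 _; move: h1; rewrite /pnorm2 => h1.
  rewrite -(@powR_inv_cancel _ (al `^ p' + be `^ p') p'); last by [].
    by rewrite h1 powR1.
  by apply: addr_ge0; apply: powR_ge0.
have hsum : lam a + mu b = N by case: hnorm.
set u := x / N; set v := y / N.
have u0 : 0 <= u by rewrite divr_ge0 // ltW.
have v0 : 0 <= v by rewrite divr_ge0 // ltW.
have huv : u `^ p + v `^ p = 1.
  rewrite /u /v !powR_div // -mulrDl -NP mulfV // gt_eqF // powR_gt0 //.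
have Y1 : u * al <= u `^ p / p + al `^ p' / p' := conjugate_powR u0 hl0 p0 p'0 hpp'.
have Y2 : v * be <= v `^ p / p + be `^ p' / p' := conjugate_powR v0 hm0 p0 p'0 hpp'.
have eY : u `^ p / p + al `^ p' / p' + (v `^ p / p + be `^ p' / p') = 1.
  have -> : u `^ p / p + al `^ p' / p' + (v `^ p / p + be `^ p' / p') =
    (u `^ p + v `^ p) * p^-1 + (al `^ p' + be `^ p') * p'^-1 by ring.
  by rewrite huv T1 !mul1r.
have la1 : lam a <= al * x := le_trans (ler_norm _) (hl a).
have mb1 : mu b <= be * y := le_trans (ler_norm _) (hm b).
have euv : u * al + v * be = (al * x + be * y) / N.
  by rewrite /u /v; field; rewrite gt_eqF.
have ge1 : 1 <= u * al + v * be.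
  by rewrite euv ler_pdivlMr // mul1r; lra.
have le1 : (al * x + be * y) / N <= 1.
by rewrite -euv; lra.
move: le1; rewrite ler_pdivrMr // mul1r => le1.
have E1 : u * al = u `^ p / p + al `^ p' / p' by lra.
have E2 : v * be = v `^ p / p + be `^ p' / p' by lra.
split; first by [].
split; first by [].
split; first by lra.
split; first by lra.
split; first exact: young_eq u0 hl0 p0 p'0 hpp' E1.
exact: young_eq v0 hm0 p0 p'0 hpp' E2.
Qed.

Lemma half (R : realType) (V : normedModType R) (p p' : R)
  (hp : 1 < p) (hp' : 1 < p') (lam : V -> R) (a : V) (y N : R) :
  0 < `|a| -> 0 <= y -> 0 < N -> N `^ p = `|a| `^ p + y `^ p ->
  (forall z, `|lam z| <= dual_norm lam * `|z|) -> 0 <= dual_norm lam ->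
  lam a = dual_norm lam * `|a| -> (`|a| / N) `^ p = dual_norm lam `^ p' ->
  lam <> (fun=> 0) /\ norming (fun z => (1 + y `^ p / `|a| `^ p) `^ p'^-1 * lam z) a.
Proof.
move=> xp y0 N0 NP hl hl0 hla hu.
have p0 : 0 < p by lra.
have p'0 : 0 < p' by lra.
have pn0 : p != 0 by rewrite gt_eqF.
have p'n0 : p' != 0 by rewrite gt_eqF.
have xpp : 0 < `|a| `^ p by apply: powR_gt0.
have ypp : 0 <= y `^ p by apply: powR_ge0.
have up : 0 < (`|a| / N) `^ p by apply: powR_gt0; rewrite divr_gt0.
have aln0 : dual_norm lam != 0.
  apply/eqP => h; move: up; by rewrite hu h powR0 // ltxx.
split.
  move=> h0; have : lam a = 0 by rewrite h0.
  rewrite hla => /eqP; rewrite mulf_eq0 (negbTE aln0) /= => /eqP hx.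
  by move: xp; rewrite hx ltxx.
have Kp : 0 < 1 + y `^ p / `|a| `^ p by rewrite ltr_pwDl // divr_ge0 // ltW.
set c := (1 + y `^ p / `|a| `^ p) `^ p'^-1.
have cp : 0 < c by apply: powR_gt0.
have hc : c * dual_norm lam = 1.
  have : (c * dual_norm lam) `^ p' == 1.
    rewrite powRM; [|exact: ltW cp|exact: hl0]. rewrite /c (@powR_inv_cancel R _ p'); [|exact: ltW Kp|exact: p'n0]. rewrite -hu powR_div //.
    rewrite NP; apply/eqP; field.
    apply/andP; split; rewrite gt_eqF //; lra.
  rewrite powR_eq1 => /or3P [/eqP //| | ]; last by rewrite (negbTE p'n0).
  by rewrite ltNge mulr_ge0 // ltW.
split.
  by rewrite (@dn_scale _ _ lam (dual_norm lam) c hl cp).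
by rewrite hla mulrA hc mul1r.
Qed.

Theorem proposition3p1 (R : realType) (A B : completeNormedModType R)
  (p p' : R) (hp : 1 < p) (hp' : 1 < p') (hpp' : p^-1 + p'^-1 = 1)
  (lam : {linear A -> R^o}) (mu : {linear B -> R^o})
  (lam_cont : continuous (lam : A -> R)) (mu_cont : continuous (mu : B -> R))
  (a : A) (b : B)
  (hlm : ~ ((lam : A -> R) = (fun=> 0) /\ (mu : B -> R) = (fun=> 0)))
  (hab : ~ (a = 0 /\ b = 0))
  (hnorm : norming_pair p p' lam mu a b) :
  (b = 0 -> (mu : B -> R) = (fun=> 0) /\ norming lam a) /\
  (a = 0 -> (lam : A -> R) = (fun=> 0) /\ norming mu b) /\
  (a != 0 -> b != 0 ->
     (lam : A -> R) <> (fun=> 0) /\ (mu : B -> R) <> (fun=> 0) /\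
     norming (fun x : A => (1 + `|b| `^ p / `|a| `^ p) `^ p'^-1 * lam x) a /\
     norming (fun y : B => (1 + `|a| `^ p / `|b| `^ p) `^ p'^-1 * mu y) b).
Proof.
have [hlb hl0] := @dn_linear R A lam lam_cont.
have [hmb hm0] := @dn_linear R B mu mu_cont.
have := @core R A B p p' hp hp' hpp' lam mu a b hlb hl0 hmb hm0 hab hnorm.
move=> /= [N0 [NP [hla [hmu [hu hv]]]]].
have p0 : 0 < p by lra.
have p'0 : 0 < p' by lra.
have pn0 : p != 0 by rewrite gt_eqF.
have p'n0 : p' != 0 by rewrite gt_eqF.
set N := pnorm2 p `|a| `|b| in N0 NP hu hv.
split.
  move=> b0.
  have y0 : `|b| = 0 by rewrite b0 normr0.
  have be0 : dual_norm (mu : B -> R) = 0.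
    move: hv; rewrite y0 mul0r powR0 // => hv.
    exact: (powR_eq0_eq0 (esym hv)).
  split.
    apply: funext => z; have := hmb z; rewrite be0 mul0r normr_le0 => /eqP //.
  have Nx : N = `|a|.
    move: NP; rewrite y0 powR0 // addr0 => NP.
    by apply: (powR_injective p0 _ _ NP); rewrite nnegrE ?normr_ge0 // ltW.
  move: hu; rewrite Nx mulfV ?gt_eqF -?Nx // powR1 => /esym/eqP.
  rewrite powR_eq1 (negbTE p'n0) orbF => /orP [/eqP al1|]; last first.
    by rewrite ltNge hl0.
  by split => //; rewrite hla al1 mul1r.
split.
  move=> a0.
  have x0 : `|a| = 0 by rewrite a0 normr0.
  have al0 : dual_norm (lam : A -> R) = 0.
    move: hu; rewrite x0 mul0r powR0 // => hu.
    exact: (powR_eq0_eq0 (esym hu)).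
  split.
    apply: funext => z; have := hlb z; rewrite al0 mul0r normr_le0 => /eqP //.
  have Ny : N = `|b|.
    move: NP; rewrite x0 powR0 // add0r => NP.
    by apply: (powR_injective p0 _ _ NP); rewrite nnegrE ?normr_ge0 // ltW.
  move: hv; rewrite Ny mulfV ?gt_eqF -?Ny // powR1 => /esym/eqP.
  rewrite powR_eq1 (negbTE p'n0) orbF => /orP [/eqP be1|]; last first.
    by rewrite ltNge hm0.
  by split => //; rewrite hmu be1 mul1r.
move=> an bn.
have xp : 0 < `|a| by rewrite normr_gt0.
have yp : 0 < `|b| by rewrite normr_gt0.
have [h1 h2] := @half R A p p' hp hp' lam a `|b| N xp (ltW yp) N0 NP hlb hl0 hla hu.
have NP' : N `^ p = `|b| `^ p + `|a| `^ p by rewrite NP addrC.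
have [h3 h4] := @half R B p p' hp hp' mu b `|a| N yp (ltW xp) N0 NP' hmb hm0 hmu hv.
by [].
Qed.
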